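(* Let $m\ge1$ and let $u$ be an $m$-labeled unranked tree with $|u|=p$ edges. The generating function $\mathbf C^{\mathcal T}_{m,p}(z)=\sum_{n\ge0} c_n z^n$, where $c_n$ is the number of $m$-labeled unranked trees with $n$ edges that contain $u$ as a subtree, is $$\mathbf C^{\mathcal T}_{m,p}(z)=\frac{z^{p+1}+\sqrt{1-4mz+2z^{p+1}+z^{2p+2}}-\sqrt{1-4mz}}{2z}.$$
   Context: An $m$-labeled unranked tree is a non-empty finite rooted tree whose nodes carry labels from $\{1,\dots,m\}$ and in which the children of every node are linearly ordered (any finite number of children). Its size is its number of edges. A tree $t$ contains $u$ as a subtree if for some node $v$ of $t$ the subtree rooted at $v$ (consisting of $v$ and all its descendants) equals $u$. *)

(* Defs.v *)
From Stdlib Require Import Reals List.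
From Coquelicot Require Import Coquelicot.
Import ListNotations.

Inductive tree : Type := Node : nat -> list tree -> tree.

(* Size = number of edges: each child contributes its own size plus the edge to it. *)
Fixpoint tsize (t : tree) : nat :=
  match t with
  | Node _ ts =>
      (fix fsize (f : list tree) : nat :=
         match f with
         | [] => 0%nat
         | t' :: f' => (S (tsize t') + fsize f')%nat
         end) ts
  end.

Inductive labeled (m : nat) : tree -> Prop :=
  | labeled_node : forall l ts,
      (1 <= l <= m)%nat -> (forall t, In t ts -> labeled m t) -> labeled m (Node l ts).

Inductive subtree (u : tree) : tree -> Prop :=
  | sub_here : subtree u u
  | sub_child : forall l ts t, In t ts -> subtree u t -> subtree u (Node l ts).

Definition is_count (P : tree -> Prop) (k : nat) : Prop :=
  exists s : list tree, NoDup s /\ (forall t, In t s <-> P t) /\ length s = k.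

(* Main.v *)
Require Import Defs.
From Stdlib Require Import Reals List Lia Lra ClassicalEpsilon.
Import ListNotations.

Fixpoint fw (f : list tree) : nat :=
  match f with [] => 0%nat | t :: f' => (S (tsize t) + fw f')%nat end.

Lemma tsize_node l ts : tsize (Node l ts) = fw ts.
Proof. induction ts; simpl in *; auto. Qed.

Definition mkT (m : nat) (ok : tree -> bool) (chs : list (list tree)) : list tree :=
  flat_map (fun l => flat_map (fun ch => if ok (Node l ch) then [Node l ch] else []) chs) (seq 1 m).

Fixpoint enumF (m : nat) (ok : tree -> bool) (fuel k : nat) : list (list tree) :=
  match fuel with
  | 0 => []
  | S f => match k with
     | 0 => [[]]
     | S k' => flat_map (fun j => flat_map (fun t => map (cons t) (enumF m ok f (k' - j)))
                        (mkT m ok (enumF m ok f j))) (seq 0 (S k'))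
     end end.

Inductive goodT (m : nat) (ok : tree -> bool) : tree -> Prop :=
 | gN : forall l ch, (1 <= l <= m)%nat -> ok (Node l ch) = true ->
        (forall t, In t ch -> goodT m ok t) -> goodT m ok (Node l ch).

Lemma mkT_in m ok chs t : In t (mkT m ok chs) <->
  exists l ch, (1 <= l <= m)%nat /\ In ch chs /\ ok (Node l ch) = true /\ t = Node l ch.
Proof.
  unfold mkT. rewrite in_flat_map. split.
  - intros [l [Hl H]]. rewrite in_flat_map in H. destruct H as [ch [Hch H]].
    apply in_seq in Hl. destruct (ok (Node l ch)) eqn:E; simpl in H; [|contradiction].
    destruct H as [H|[]]. exists l, ch. repeat split; auto; lia.
  - intros [l [ch [Hl [Hch [Hok ->]]]]]. exists l. split. apply in_seq; lia.
    rewrite in_flat_map. exists ch. split; auto. rewrite Hok. simpl; auto.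
Qed.

Lemma enumF_w m ok f : forall k s, In s (enumF m ok f k) -> fw s = k.
Proof.
  induction f as [|f IH]; intros k s H; cbn [enumF] in H; [contradiction|].
  destruct k as [|k'].
  - destruct H as [<-|[]]; reflexivity.
  - rewrite in_flat_map in H. destruct H as [j [Hj H]]. apply in_seq in Hj.
    rewrite in_flat_map in H. destruct H as [t [Ht H]]. apply in_map_iff in H.
    destruct H as [r [<- Hr]]. apply mkT_in in Ht. destruct Ht as [l [ch [_ [Hch [_ ->]]]]].
    apply IH in Hr. apply IH in Hch. cbn [fw]. rewrite tsize_node. lia.
Qed.

Lemma enumF_in m ok f : forall k s, (k < f)%nat ->
  (In s (enumF m ok f k) <-> Forall (goodT m ok) s /\ fw s = k).
Proof.
  induction f as [|f IH]; intros k s Hk; [lia|]. cbn [enumF]. destruct k as [|k'].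
  - split.
    + intros [<-|[]]. split; auto.
    + intros [_ H]. destruct s as [|t s]; [left; auto|]. simpl in H. lia.
  - rewrite in_flat_map. split.
    + intros [j [Hj H]]. apply in_seq in Hj.
      rewrite in_flat_map in H. destruct H as [t [Ht H]]. apply in_map_iff in H.
      destruct H as [r [<- Hr]]. apply mkT_in in Ht. destruct Ht as [l [ch [Hl [Hch [Hok ->]]]]].
      apply IH in Hr; [|lia]. apply IH in Hch; [|lia]. destruct Hr as [Hr1 Hr2].
      destruct Hch as [Hc1 Hc2]. split.
      * constructor; auto. constructor; auto. rewrite Forall_forall in Hc1. auto.
      * cbn [fw]. rewrite tsize_node. lia.
    + intros [Hg Hw]. destruct s as [|t r]; [simpl in Hw; lia|].
      inversion Hg as [|? ? Ht Hr]; subst. inversion Ht as [l ch Hl Hok Hch]; subst.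
      cbn [fw] in Hw. rewrite tsize_node in Hw.
      exists (fw ch). split. apply in_seq; lia.
      rewrite in_flat_map. exists (Node l ch). split.
      * apply mkT_in. exists l, ch. split; [auto|]. split.
        { apply IH. lia. split; auto. apply Forall_forall; auto. }
        split; auto.
      * apply in_map. apply IH. lia. split; auto. lia.
Qed.

Lemma NoDup_flat_map_proj {A B} (pi : B -> A) (h : A -> list B) (g : list A) :
  NoDup g -> (forall a, In a g -> NoDup (h a)) -> (forall a b, In a g -> In b (h a) -> pi b = a) ->
  NoDup (flat_map h g).
Proof.
  induction g as [|a g IH]; intros Hg Hh Hp; simpl; [constructor|].
  inversion Hg; subst. apply NoDup_app.
  - apply Hh; simpl; auto.
  - apply IH; auto; intros; [apply Hh|apply Hp]; simpl; auto.
  - intros b Hb Hb'. apply in_flat_map in Hb'. destruct Hb' as [a' [Ha' Hb']].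
    assert (pi b = a) by (apply Hp; simpl; auto).
    assert (pi b = a') by (apply Hp; simpl; auto). subst. congruence.
Qed.

Lemma mkT_nodup m ok chs : NoDup chs -> NoDup (mkT m ok chs).
Proof.
  intros H. unfold mkT.
  apply NoDup_flat_map_proj with (pi := fun t => match t with Node l _ => l end).
  - apply seq_NoDup.
  - intros l _. apply NoDup_flat_map_proj with (pi := fun t => match t with Node _ c => c end); auto.
    + intros ch _. destruct (ok (Node l ch)); repeat constructor. intros [].
    + intros ch b _ Hb. destruct (ok (Node l ch)); simpl in Hb; [|contradiction].
      destruct Hb as [<-|[]]; auto.
  - intros l b _ Hb. apply in_flat_map in Hb. destruct Hb as [ch [_ Hb]].
    destruct (ok (Node l ch)); simpl in Hb; [|contradiction]. destruct Hb as [<-|[]]; auto.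
Qed.

Lemma enumF_nodup m ok f : forall k, NoDup (enumF m ok f k).
Proof.
  induction f as [|f IH]; intros k; cbn [enumF]; [constructor|]. destruct k as [|k'].
  - repeat constructor. intros [].
  - apply NoDup_flat_map_proj with (pi := fun s => match s with t :: _ => tsize t | [] => 0%nat end).
    + apply seq_NoDup.
    + intros j _. apply NoDup_flat_map_proj with (pi := fun s => match s with t :: _ => t | [] => Node 0 [] end).
      * apply mkT_nodup, IH.
      * intros t _. apply NoDup_map_NoDup_ForallPairs; auto.
        intros x y _ _ E. injection E; auto.
      * intros t b _ Hb. apply in_map_iff in Hb. destruct Hb as [r [<- _]]. auto.
    + intros j b _ Hb. apply in_flat_map in Hb. destruct Hb as [t [Ht Hb]].
      apply in_map_iff in Hb. destruct Hb as [r [<- _]].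
      apply mkT_in in Ht. destruct Ht as [l [ch [_ [Hch [_ ->]]]]].
      rewrite tsize_node. eapply enumF_w; eauto.
Qed.

Lemma flat_map_ext_in {A B} (f g : A -> list B) l :
  (forall x, In x l -> f x = g x) -> flat_map f l = flat_map g l.
Proof. induction l; simpl; intros H; auto. rewrite H, IHl; auto. Qed.

Lemma enumF_fuel m ok f : forall f' k, (k < f)%nat -> (k < f')%nat -> enumF m ok f k = enumF m ok f' k.
Proof.
  induction f as [|f IH]; intros f' k H1 H2; [lia|]. destruct f' as [|f']; [lia|].
  cbn [enumF]. destruct k as [|k']; auto.
  apply flat_map_ext_in. intros j Hj. apply in_seq in Hj.
  rewrite (IH f' j) by lia. apply flat_map_ext_in. intros t _.
  rewrite (IH f' (k' - j)%nat) by lia. reflexivity.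
Qed.

Definition E m ok k := enumF m ok (S k) k.

Lemma E_in m ok k s : In s (E m ok k) <-> Forall (goodT m ok) s /\ fw s = k.
Proof. apply enumF_in. lia. Qed.

Lemma list_sum_const {A} (l : list A) c : list_sum (map (fun _ => c) l) = (length l * c)%nat.
Proof. induction l; simpl; auto. Qed.

Lemma enumF_SS m ok f k' : enumF m ok (S f) (S k') =
  flat_map (fun j => flat_map (fun t => map (cons t) (enumF m ok f (k' - j)))
                        (mkT m ok (enumF m ok f j))) (seq 0 (S k')).
Proof. reflexivity. Qed.

Lemma E_len m ok k : length (E m ok (S k)) =
  list_sum (map (fun j => length (mkT m ok (E m ok j)) * length (E m ok (k - j)))%nat (seq 0 (S k))).
Proof.
  unfold E at 1. rewrite enumF_SS, length_flat_map. f_equal. apply map_ext_in.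
  intros j Hj. apply in_seq in Hj. rewrite length_flat_map.
  rewrite (enumF_fuel m ok (S k) (S j) j) by lia.
  rewrite (map_ext (fun x => length (map (cons x) (enumF m ok (S k) (k - j)))) (fun _ => length (E m ok (k-j)))).
  2:{ intros. rewrite length_map. unfold E. apply f_equal, enumF_fuel; lia. }
  rewrite list_sum_const. reflexivity.
Qed.

Lemma mkT_true_len m chs : length (mkT m (fun _ => true) chs) = (m * length chs)%nat.
Proof.
  unfold mkT. rewrite length_flat_map.
  rewrite (map_ext _ (fun _ => length chs)).
  - rewrite list_sum_const, length_seq. reflexivity.
  - intros l. induction chs; simpl; auto.
Qed.

Lemma mkT_E_in m ok n t : In t (mkT m ok (E m ok n)) <-> goodT m ok t /\ tsize t = n.
Proof.
  rewrite mkT_in. split.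
  - intros [l [ch [Hl [Hch [Hok ->]]]]]. apply E_in in Hch. destruct Hch as [H1 H2].
    rewrite tsize_node. split; auto. constructor; auto. apply Forall_forall; auto.
  - intros [Hg Hs]. inversion Hg as [l ch Hl Hok Hch]; subst. exists l, ch.
    split; [auto|]. split; [|split; auto]. apply E_in. rewrite tsize_node. split; auto. apply Forall_forall; auto.
Qed.

Lemma in_fw t ts : In t ts -> (tsize t < fw ts)%nat.
Proof. induction ts; simpl; [intros []|]. intros [H|H]; subst; try lia. apply IHts in H. lia. Qed.

Lemma subtree_size u t : subtree u t -> (tsize u <= tsize t)%nat.
Proof. induction 1; auto. rewrite tsize_node. apply in_fw in H. lia. Qed.

Definition okT : tree -> bool := fun _ => true.
Definition okA (u : tree) : tree -> bool :=
  fun t => if excluded_middle_informative (subtree u t) then false else true.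

Lemma goodT_true m t : goodT m okT t <-> labeled m t.
Proof.
  split; induction 1; constructor; auto.
Qed.

Lemma goodT_A m u t : goodT m (okA u) t <-> labeled m t /\ ~ subtree u t.
Proof.
  split.
  - induction 1 as [l ch Hl Hok Hch IH]. unfold okA in Hok.
    destruct (excluded_middle_informative (subtree u (Node l ch))); [discriminate|].
    split; auto. constructor; auto. intros t Ht. apply IH; auto.
  - intros [H1 H2]. revert H2. induction H1 as [l ts Hl Hts IH]; intros Hn.
    constructor; auto.
    + unfold okA. destruct (excluded_middle_informative (subtree u (Node l ts))); tauto.
    + intros t Ht. apply IH; auto. intros Hs. apply Hn. econstructor; eauto.
Qed.

Lemma count_eq {A} (l1 l2 : list A) : NoDup l1 -> NoDup l2 ->
  (forall x, In x l1 <-> In x l2) -> length l1 = length l2.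
Proof.
  intros H1 H2 H. apply Nat.le_antisymm; apply NoDup_incl_length; auto; intros x; apply H.
Qed.

Definition decb (P : Prop) : bool := if excluded_middle_informative P then true else false.
Lemma decb_true P : decb P = true <-> P.
Proof. unfold decb. destruct (excluded_middle_informative P); split; intros; auto; discriminate || contradiction. Qed.

Lemma comb_a m u c n :
  (forall n : nat, is_count (fun t => labeled m t /\ tsize t = n /\ subtree u t) (c n)) ->
  (c n + length (mkT m (okA u) (E m (okA u) n)) = length (mkT m okT (E m okT n)))%nat.
Proof.
  intros Hc. set (L1 := mkT m okT (E m okT n)).
  rewrite <- (filter_length (fun t => decb (subtree u t)) L1).
  assert (N1 : NoDup L1) by (apply mkT_nodup, enumF_nodup).
  f_equal.
  - destruct (Hc n) as [s [Hs1 [Hs2 <-]]]. apply count_eq; auto. apply NoDup_filter; auto.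
    intros x. rewrite Hs2, filter_In, decb_true. unfold L1. rewrite mkT_E_in, goodT_true. tauto.
  - apply count_eq. apply mkT_nodup, enumF_nodup. apply NoDup_filter; auto.
    intros x. rewrite filter_In, mkT_E_in, goodT_A. unfold L1. rewrite mkT_E_in, goodT_true.
    unfold decb. destruct (excluded_middle_informative (subtree u x)); simpl; intuition discriminate.
Qed.

Lemma comb_b m u n : labeled m u ->
  (length (mkT m (okA u) (E m (okA u) n)) + (if Nat.eqb n (tsize u) then 1 else 0)
   = m * length (E m (okA u) n))%nat.
Proof.
  intros Hu. rewrite <- mkT_true_len. set (L3 := mkT m (fun _ => true) (E m (okA u) n)).
  assert (N3 : NoDup L3) by (apply mkT_nodup, enumF_nodup).
  assert (M3 : forall t, In t L3 <-> exists l ch, (1 <= l <= m)%nat /\ Forall (goodT m (okA u)) ch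
      /\ fw ch = n /\ t = Node l ch).
  { intros t. unfold L3. rewrite mkT_in. split.
    - intros [l [ch [Hl [Hch [_ ->]]]]]. apply E_in in Hch. exists l, ch. tauto.
    - intros [l [ch [Hl [H1 [H2 ->]]]]]. exists l, ch. repeat split; try tauto. apply E_in; auto. }
  rewrite <- (filter_length (fun t => negb (decb (t = u))) L3).
  f_equal.
  - apply count_eq. apply mkT_nodup, enumF_nodup. apply NoDup_filter; auto.
    intros x. rewrite filter_In, mkT_E_in, goodT_A, M3.
    unfold decb. destruct (excluded_middle_informative (x = u)) as [Hx|Hx]; simpl.
    + split; [|intros [_ H]; discriminate]. intros [[_ H] _]. subst. exfalso. apply H. constructor.
    + split.
      * intros [[Hl Hs] Hw]. split; auto. destruct Hl as [l ch Hl Hch]. exists l, ch.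
        split; auto. split; [|split; auto; rewrite <- tsize_node; auto].
        apply Forall_forall. intros t Ht. apply goodT_A. split; auto.
        intros Hs'. apply Hs. econstructor; eauto.
      * intros [[l [ch [Hl [Hch [Hw ->]]]]] _]. rewrite Forall_forall in Hch.
        split; [split|].
        -- constructor; auto. intros t Ht. apply (goodT_A m u t), Hch; auto.
        -- intros Hs. inversion Hs; subst; [now apply Hx|].
           apply (goodT_A m u t); auto.
        -- rewrite tsize_node; auto.
  - rewrite (filter_ext _ (fun t => decb (t = u))) by (intros; apply Bool.negb_involutive).
    assert (Hch : forall l ch, u = Node l ch -> Forall (goodT m (okA u)) ch).
    { intros l ch E. apply Forall_forall. intros t Ht. apply goodT_A. split.
      - subst. inversion Hu; auto.
      - intros Hs. apply subtree_size in Hs. apply in_fw in Ht. rewrite <- (tsize_node l ch), <- E in Ht. lia. }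
    destruct (Nat.eqb_spec n (tsize u)) as [Hn|Hn].
    + change 1%nat with (length [u]). apply count_eq; auto.
      repeat constructor; intros []. apply NoDup_filter; auto.
      intros x. rewrite filter_In, decb_true, M3. simpl. split.
      2:{ intros [_ ->]; auto. }
      intros [<-|[]]. split; auto. destruct Hu as [l ch Hl Hts]. exists l, ch.
        split; auto. split. eapply Hch; eauto. split; auto.
    + destruct (filter _ L3) as [|x s] eqn:Ef; auto. exfalso.
      assert (Hx : In x (filter (fun t => decb (t = u)) L3)) by (rewrite Ef; simpl; auto).
      rewrite filter_In, decb_true, M3 in Hx. destruct Hx as [[l [ch [_ [_ [Hw ->]]]]] Hx].
      apply Hn. rewrite <- Hx, tsize_node. auto.
Qed.

From Coquelicot Require Import Coquelicot.
Open Scope R_scope.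

Lemma sum_S (An : nat -> R) N : sum_f_R0 An (S N) = An 0%nat + sum_f_R0 (fun i => An (S i)) N.
Proof. rewrite (decomp_sum An (S N)) by lia. reflexivity. Qed.

Lemma dsum_le : forall N (a b : nat -> R), (forall k, 0 <= a k) -> (forall k, 0 <= b k) ->
  sum_f_R0 (fun k => sum_f_R0 (fun j => a j * b (k - j)%nat) k) N <= sum_f_R0 a N * sum_f_R0 b N.
Proof.
  induction N as [|N IH]; intros a b Ha Hb.
  - simpl. lra.
  - rewrite sum_S. simpl (sum_f_R0 _ 0).
    rewrite (sum_eq (fun i => sum_f_R0 (fun j => a j * b (S i - j)%nat) (S i))
                    (fun i => a 0%nat * b (S i) + sum_f_R0 (fun j => a (S j) * b (i - j)%nat) i)).
    2:{ intros i _. rewrite sum_S. reflexivity. }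
    rewrite plus_sum.
    assert (E1 : sum_f_R0 (fun i => a 0%nat * b (S i)) N = a 0%nat * sum_f_R0 (fun i => b (S i)) N).
    { rewrite scal_sum. apply sum_eq. intros; ring. }
    rewrite E1. rewrite (sum_S a N).
    specialize (IH (fun j => a (S j)) b (fun k => Ha (S k)) Hb).
    assert (H1 : sum_f_R0 b N <= sum_f_R0 b (S N)) by (rewrite tech5; specialize (Hb (S N)); lra).
    rewrite (sum_S b N) in H1.
    assert (H2 : 0 <= sum_f_R0 (fun j => a (S j)) N) by (apply cond_pos_sum; auto).
    assert (H3 : sum_f_R0 (fun j => a (S j)) N * sum_f_R0 b N <= sum_f_R0 (fun j => a (S j)) N * (b 0%nat + sum_f_R0 (fun i => b (S i)) N))
      by (apply Rmult_le_compat_l; auto).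
    rewrite (sum_S b N). simpl (0 - 0)%nat.
    nra.
Qed.

Lemma gbound (g : nat -> R) : (forall k, 0 <= g k) -> g 0%nat <= 1 ->
  (forall k, g (S k) <= / 4 * sum_f_R0 (fun j => g j * g (k - j)%nat) k) ->
  forall N, sum_f_R0 g N <= 2.
Proof.
  intros Hg H0 Hr N. induction N as [|N IH].
  - simpl. lra.
  - rewrite sum_S.
    assert (A1 : sum_f_R0 (fun i => g (S i)) N <= / 4 * sum_f_R0 (fun k => sum_f_R0 (fun j => g j * g (k - j)%nat) k) N).
    { rewrite scal_sum. apply sum_Rle. intros n _. rewrite Rmult_comm. apply Hr. }
    pose proof (dsum_le N g g Hg Hg).
    pose proof (cond_pos_sum g N Hg). nra.
Qed.

Lemma Gbound (M : R) (G t : nat -> R) : 0 < M -> G 0%nat = 1 -> (forall k, 0 <= G k) ->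
  (forall k, 0 <= t k <= M * G k) ->
  (forall k, G (S k) = sum_f_R0 (fun j => t j * G (k - j)%nat) k) ->
  forall k, G k * (/ (4 * M)) ^ k <= 2.
Proof.
  intros HM H0 HG Ht Hr.
  set (x := / (4 * M)).
  assert (Hx : 0 < x) by (unfold x; apply Rinv_0_lt_compat; lra).
  assert (HxM : x * M = / 4) by (unfold x; field; lra).
  set (g := fun k => G k * x ^ k).
  assert (Hg : forall k, 0 <= g k).
  { intros k. unfold g. apply Rmult_le_pos; auto. apply pow_le; lra. }
  assert (B : forall N, sum_f_R0 g N <= 2).
  { apply gbound; auto.
    - unfold g. rewrite H0. simpl. lra.
    - intros k. unfold g. rewrite Hr. rewrite (Rmult_comm (sum_f_R0 _ k)), !scal_sum.
      apply sum_Rle. intros j Hj.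
      replace (x ^ S k) with (x * M * (x ^ j * x ^ (k - j)) * / M).
      2:{ rewrite <- pow_add. replace (j + (k - j))%nat with k by lia. simpl. field. lra. }
      rewrite HxM. specialize (Ht j). specialize (HG (k - j)%nat).
      assert (0 <= x ^ j) by (apply pow_le; lra).
      assert (0 <= x ^ (k - j)) by (apply pow_le; lra).
      assert (t j * / M <= G j).
      { apply (Rmult_le_reg_r M); auto. field_simplify; lra. }
      assert (0 <= t j * / M) by (apply Rmult_le_pos; [lra| left; apply Rinv_0_lt_compat; lra]).
      replace (t j * G (k - j)%nat * (/ 4 * (x ^ j * x ^ (k - j)) * / M))
        with ((t j * / M * x ^ j) * (G (k - j)%nat * x ^ (k - j)) * /4) by ring.
      apply Rmult_le_compat_r; [lra|]. apply Rmult_le_compat_r.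
      apply Rmult_le_pos; auto. apply Rmult_le_compat_r; auto. }
  intros k. specialize (B k). fold x. change (g k <= 2).
  destruct k. simpl in B. exact B. rewrite tech5 in B.
  pose proof (cond_pos_sum g k Hg). lra.
Qed.

Lemma geom2 q c : 0 <= q < 1 -> is_series (fun k => c * q ^ k) (c * / (1 - q)).
Proof.
  intros Hq. apply (is_series_scal_l c (fun k => q ^ k)). apply is_series_geom.
  rewrite Rabs_pos_eq; lra.
Qed.

Lemma gf (M : R) (G t : nat -> R) (z : R) : 0 < M -> G 0%nat = 1 -> (forall k, 0 <= G k) ->
  (forall k, 0 <= t k <= M * G k) ->
  (forall k, G (S k) = sum_f_R0 (fun j => t j * G (k - j)%nat) k) ->
  4 * M * Rabs z < 1 ->
  exists g tau, is_series (fun k => G k * z ^ k) g /\ is_series (fun k => t k * z ^ k) tau /\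
    g = 1 + z * tau * g /\ Rabs g <= 2 / (1 - 4 * M * Rabs z).
Proof.
  intros HM H0 HG Ht Hr Hz.
  set (q := 4 * M * Rabs z).
  assert (Hq : 0 <= q < 1) by (unfold q; split; [|lra]; pose proof (Rabs_pos z); nra).
  pose proof (Gbound M G t HM H0 HG Ht Hr) as GB.
  assert (Eq : forall k, Rabs z ^ k = (/ (4 * M)) ^ k * q ^ k).
  { intros k. rewrite <- Rpow_mult_distr. f_equal. unfold q. field. lra. }
  assert (B1 : forall k, Rabs (G k * z ^ k) <= 2 * q ^ k).
  { intros k. rewrite Rabs_mult, <- RPow_abs, Rabs_pos_eq by auto. rewrite Eq, <- Rmult_assoc.
    apply Rmult_le_compat_r; auto. apply pow_le; lra. }
  assert (B2 : forall k, Rabs (t k * z ^ k) <= (2 * M) * q ^ k).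
  { intros k. rewrite Rabs_mult, <- RPow_abs, Rabs_pos_eq by (apply Ht). rewrite Eq.
    specialize (GB k). specialize (Ht k). assert (0 <= q ^ k) by (apply pow_le; lra).
    assert (0 <= (/ (4 * M)) ^ k) by (apply pow_le; left; apply Rinv_0_lt_compat; lra).
    assert (t k * (/ (4 * M)) ^ k <= M * (G k * (/ (4 * M)) ^ k)).
    { rewrite <- Rmult_assoc. apply Rmult_le_compat_r; lra. }
    assert (t k * (/ (4 * M)) ^ k <= 2 * M).
    { eapply Rle_trans; [eassumption|]. rewrite Rmult_comm. apply Rmult_le_compat_r; lra. }
    rewrite <- Rmult_assoc. apply Rmult_le_compat_r; lra. }
  assert (EA : ex_series (fun k => Rabs (G k * z ^ k))).
  { apply (@ex_series_le _ R_CompleteNormedModule _ (fun k => 2 * q ^ k)).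
    - intros n. unfold norm; simpl. unfold abs; simpl. rewrite Rabs_Rabsolu. apply B1.
    - eexists. apply geom2; auto. }
  assert (EB : ex_series (fun k => Rabs (t k * z ^ k))).
  { apply (@ex_series_le _ R_CompleteNormedModule _ (fun k => (2 * M) * q ^ k)).
    - intros n. unfold norm; simpl. unfold abs; simpl. rewrite Rabs_Rabsolu. apply B2.
    - eexists. apply geom2; auto. }
  pose proof (Series_correct _ (ex_series_Rabs _ EA)) as SA.
  pose proof (Series_correct _ (ex_series_Rabs _ EB)) as SB.
  set (g := Series (fun k => G k * z ^ k)) in *.
  set (tau := Series (fun k => t k * z ^ k)) in *.
  exists g, tau. split; [auto|]. split; [auto|]. split.
  - pose proof (is_series_mult _ _ _ _ SB SA EB EA) as SM.
    assert (SM' : is_series (fun n => G (S n) * z ^ n) (tau * g)).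
    { eapply is_series_ext; [|exact SM]. intros n. simpl. rewrite Hr, Rmult_comm, scal_sum.
      apply sum_eq. intros j Hj.
      replace (z ^ n) with (z ^ j * z ^ (n - j)) by (rewrite <- pow_add; f_equal; lia). ring. }
    pose proof (is_series_scal_l z _ _ SM') as SZ.
    assert (SI : is_series (fun k => G (S k) * z ^ (S k)) (g - 1)).
    { apply (is_series_incr_1 (fun k => G k * z ^ k)). rewrite H0. simpl.
      assert (Eg : g = g - 1 + 1 * 1) by ring. rewrite Eg in SA at 1. exact SA. }
    assert (SZ' : is_series (fun k => G (S k) * z ^ (S k)) (z * (tau * g))).
    { eapply is_series_ext; [|exact SZ]. intros n. simpl. unfold scal; simpl. unfold mult; simpl. ring. }
    apply is_series_unique in SI. apply is_series_unique in SZ'. rewrite SI in SZ'. lra.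
  - unfold g. eapply Rle_trans. apply Series_Rabs; auto.
    replace (2 / (1 - q)) with (Series (fun k => 2 * q ^ k)).
    + apply Series_le. intros n. split; [apply Rabs_pos|apply B1]. eexists; apply geom2; auto.
    + apply is_series_unique. fold q. unfold Rdiv. apply geom2; auto.
Qed.

Lemma root_sel a b c x : a <> 0 -> a * x ^ 2 - b * x + c = 0 -> 2 * Rabs a * Rabs x < b ->
  x = (b - sqrt (b ^ 2 - 4 * a * c)) / (2 * a).
Proof.
  intros Ha Hq Hb.
  assert (D : b ^ 2 - 4 * a * c = (b - 2 * a * x) ^ 2).
  { replace c with (b * x - a * x ^ 2) by lra. ring. }
  assert (P : 2 * a * x <= 2 * Rabs a * Rabs x).
  { rewrite (Rmult_assoc 2 (Rabs a)), <- Rabs_mult. pose proof (Rle_abs (a * x)). lra. }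
  rewrite D, sqrt_pow2 by lra. field. auto.
Qed.

Lemma ind_series (p : nat) (x : R) : is_series (fun k => if Nat.eqb k p then x else 0) x.
Proof.
  assert (H : forall n, sum_f_R0 (fun k => if Nat.eqb k p then x else 0) n = if Nat.leb p n then x else 0).
  { induction n as [|n IH].
    - simpl. destruct p; simpl; auto.
    - rewrite tech5, IH. destruct (Nat.eqb_spec (S n) p) as [E|E].
      + subst. rewrite (proj2 (Nat.leb_nle (S n) n)) by lia. rewrite Nat.leb_refl. ring.
      + destruct (Nat.leb_spec p n); destruct (Nat.leb_spec p (S n)); try lia; ring. }
  unfold is_series. change (is_lim_seq (sum_n (fun k => if Nat.eqb k p then x else 0)) x).
  apply is_lim_seq_ext_loc with (u := fun _ => x); [|apply is_lim_seq_const].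
  exists p. intros n Hn. rewrite sum_n_Reals, H. rewrite (proj2 (Nat.leb_le p n)) by lia. reflexivity.
Qed.

Lemma pow_le1 y n : 0 <= y <= 1 -> y ^ n <= 1.
Proof.
  intros H. induction n; simpl; [lra|]. assert (0 <= y ^ n) by (apply pow_le; lra). nra.
Qed.

Lemma INR_list_sum (f : nat -> nat) k :
  INR (list_sum (map f (seq 0 (S k)))) = sum_f_R0 (fun j => INR (f j)) k.
Proof.
  induction k as [|k IH].
  - simpl. rewrite Nat.add_0_r. reflexivity.
  - rewrite seq_S, map_app, list_sum_app, plus_INR, IH, tech5. simpl. rewrite Nat.add_0_r. reflexivity.
Qed.

Lemma G_rec m ok k : INR (length (E m ok (S k))) =
  sum_f_R0 (fun j => INR (length (mkT m ok (E m ok j))) * INR (length (E m ok (k - j)))) k.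
Proof.
  rewrite E_len, INR_list_sum. apply sum_eq. intros. apply mult_INR.
Qed.

Lemma G_0 m ok : INR (length (E m ok 0)) = 1.
Proof. reflexivity. Qed.

Theorem lemma10 (m : nat) (u : tree) (c : nat -> nat) :
  (1 <= m)%nat ->
  labeled m u ->
  (forall n : nat,
      is_count (fun t => labeled m t /\ tsize t = n /\ subtree u t) (c n)) ->
  exists r : R, 0 < r /\
    forall z : R, 0 < Rabs z < r ->
      is_series (fun n => INR (c n) * z ^ n)
        ((z ^ (tsize u + 1)
          + sqrt (1 - 4 * INR m * z + 2 * z ^ (tsize u + 1) + z ^ (2 * tsize u + 2))
          - sqrt (1 - 4 * INR m * z)) / (2 * z)).
Proof.
  intros Hm Hu Hc.
  set (M := INR m). set (p := tsize u).
  assert (HM : 1 <= M) by (unfold M; apply (le_INR 1); auto).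
  set (G1 := fun k => INR (length (E m okT k))).
  set (t1 := fun k => INR (length (mkT m okT (E m okT k)))).
  set (G2 := fun k => INR (length (E m (okA u) k))).
  set (t2 := fun k => INR (length (mkT m (okA u) (E m (okA u) k)))).
  assert (T1 : forall k, t1 k = M * G1 k).
  { intros k. unfold t1, G1, M. rewrite <- mult_INR. f_equal. apply mkT_true_len. }
  assert (T2 : forall k, t2 k = M * G2 k - (if Nat.eqb k p then 1 else 0)).
  { intros k. unfold t2, G2, M. rewrite <- mult_INR, <- (comb_b m u k Hu), plus_INR.
    unfold p. destruct (Nat.eqb k (tsize u)); simpl; ring. }
  assert (CC : forall n, INR (c n) = t1 n - t2 n).
  { intros n. unfold t1, t2. rewrite <- (comb_a m u c n Hc), plus_INR. ring. }
  exists (/ (16 * M)). split. { apply Rinv_0_lt_compat. lra. }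
  intros z [Hz0 Hz].
  assert (HzM : M * Rabs z < / 16).
  { apply (Rmult_lt_compat_l M) in Hz; [|lra]. replace (M * / (16 * M)) with (/16) in Hz by (field; lra). lra. }
  assert (Hq : 4 * M * Rabs z < 1) by lra.
  assert (Hz1 : Rabs z < 1).
  { assert (Rabs z <= M * Rabs z) by (pose proof (Rabs_pos z); nra). lra. }
  assert (Hzn : z <> 0) by (intros ->; rewrite Rabs_R0 in Hz0; lra).
  destruct (gf M G1 t1 z ltac:(lra) (G_0 m okT) (fun k => pos_INR _)
     ltac:(intros k; rewrite T1; split; [apply Rmult_le_pos; [lra|apply pos_INR]|lra])
     (fun k => G_rec m okT k) Hq) as [g1 [tau1 [S1 [ST1 [E1 B1]]]]].
  assert (P2 : forall k, 0 <= t2 k <= M * G2 k).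
  { intros k. split; [apply pos_INR|]. rewrite T2. destruct (Nat.eqb k p); lra. }
  destruct (gf M G2 t2 z ltac:(lra) (G_0 m (okA u)) (fun k => pos_INR _) P2
     (fun k => G_rec m (okA u) k) Hq) as [g2 [tau2 [S2 [ST2 [E2 B2]]]]].
  assert (Tau1 : tau1 = M * g1).
  { apply is_series_unique in ST1. rewrite <- ST1. apply is_series_unique.
    eapply is_series_ext; [|apply (is_series_scal_l M _ _ S1)].
    intros n. unfold scal; simpl; unfold mult; simpl. rewrite T1. ring. }
  assert (Tau2 : tau2 = M * g2 - z ^ p).
  { apply is_series_unique in ST2. rewrite <- ST2. apply is_series_unique.
    eapply is_series_ext; [|apply (is_series_minus _ _ _ _ (is_series_scal_l M _ _ S2) (ind_series p (z ^ p)))].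
    intros n. unfold scal, plus, opp; simpl; unfold mult; simpl. rewrite T2.
    destruct (Nat.eqb_spec n p); [subst|]; ring. }
  assert (Bd1 : Rabs g1 <= 8 / 3).
  { eapply Rle_trans; [exact B1|]. apply (Rmult_le_reg_r (1 - 4 * M * Rabs z)); [lra|].
    unfold Rdiv. rewrite Rmult_assoc, Rinv_l by lra. lra. }
  assert (Bd2 : Rabs g2 <= 8 / 3).
  { eapply Rle_trans; [exact B2|]. apply (Rmult_le_reg_r (1 - 4 * M * Rabs z)); [lra|].
    unfold Rdiv. rewrite Rmult_assoc, Rinv_l by lra. lra. }
  assert (HMz : M * z <> 0) by (apply Rmult_integral_contrapositive; split; lra).
  assert (AMz : Rabs (M * z) = M * Rabs z) by (rewrite Rabs_mult, Rabs_pos_eq by lra; auto).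
  assert (Zp : z ^ (p + 1) = z ^ p * z) by (rewrite pow_add; simpl; ring).
  assert (R1 : g1 = (1 - sqrt (1 ^ 2 - 4 * (M * z) * 1)) / (2 * (M * z))).
  { apply root_sel; auto.
    - rewrite Tau1 in E1. replace (M * z * g1 ^ 2 - 1 * g1 + 1) with (1 + z * (M * g1) * g1 - g1) by ring. lra.
    - rewrite AMz. pose proof (Rabs_pos g1). pose proof (Rabs_pos z). nra. }
  assert (Hzp : Rabs (z ^ (p + 1)) <= Rabs z).
  { rewrite Zp, Rabs_mult, <- RPow_abs. pose proof (pow_le1 (Rabs z) p ltac:(split; [apply Rabs_pos|lra])).
    pose proof (Rabs_pos z). nra. }
  assert (R2 : g2 = ((1 + z ^ (p + 1)) - sqrt ((1 + z ^ (p + 1)) ^ 2 - 4 * (M * z) * 1)) / (2 * (M * z))).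
  { apply root_sel; auto.
    - rewrite Tau2 in E2. rewrite Zp. replace (M * z * g2 ^ 2 - (1 + z ^ p * z) * g2 + 1)
        with (1 + z * (M * g2 - z ^ p) * g2 - g2) by ring. lra.
    - rewrite AMz. pose proof (Rabs_pos g2). pose proof (Rabs_pos z).
      pose proof (Rabs_le_between (z ^ (p + 1))). pose proof (Rle_abs (- z ^ (p + 1))). rewrite Rabs_Ropp in *.
      nra. }
  replace (1 ^ 2 - 4 * (M * z) * 1) with (1 - 4 * M * z) in R1 by ring.
  replace ((1 + z ^ (p + 1)) ^ 2 - 4 * (M * z) * 1)
    with (1 - 4 * M * z + 2 * z ^ (p + 1) + z ^ (2 * p + 2)) in R2.
  2:{ replace (2 * p + 2)%nat with ((p + 1) + (p + 1))%nat by lia. rewrite (pow_add z (p + 1) (p + 1)). ring. }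
  set (s1 := sqrt (1 - 4 * M * z)) in *.
  set (s2 := sqrt (1 - 4 * M * z + 2 * z ^ (p + 1) + z ^ (2 * p + 2))) in *.
  replace ((z ^ (p + 1) + s2 - s1) / (2 * z)) with (tau1 - tau2).
  2:{ rewrite Tau1, Tau2, R1, R2, Zp. field. split; lra. }
  eapply is_series_ext; [|apply (is_series_minus _ _ _ _ ST1 ST2)].
  intros n. unfold plus, opp; simpl. rewrite CC. ring.
Qed.
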